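(* Let $\Omega_T$ be the infinite triangular lattice graph, i.e. the graph with vertex set $\mathbb{Z}^2$ in which $(a,b)$ is adjacent to $(a\pm1,b)$, $(a,b\pm1)$, $(a+1,b+1)$ and $(a-1,b-1)$ (a 6-regular graph). Then $\chi_{td}(\Omega_T) = 12$.
   Context: For a (possibly infinite) simple graph $G$ and a positive integer $k$, a proper $k$-total difference labeling of $G$ is a function $f: V(G)\to\{1,\dots,k\}$, extended to edges by $f(\{u,v\}) = |f(u)-f(v)|$, such that: (i) adjacent vertices receive different labels; (ii) two distinct edges sharing a vertex receive different labels; (iii) no edge receives the same label as either of its endpoints. $\chi_{td}(G)$ denotes the smallest $k$ for which $G$ has a proper $k$-total difference labeling. *)

(* Defs.v *)
From Stdlib Require Import ZArith Lia.
Open Scope Z_scope.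

Record graph := { vtx : Type; adj : vtx -> vtx -> Prop }.

Definition tri_adj (p q : Z * Z) : Prop :=
  let (a, b) := p in let (c, d) := q in
  (c = a + 1 /\ d = b) \/ (c = a - 1 /\ d = b) \/
  (c = a /\ d = b + 1) \/ (c = a /\ d = b - 1) \/
  (c = a + 1 /\ d = b + 1) \/ (c = a - 1 /\ d = b - 1).

Definition Omega_T : graph := {| vtx := Z * Z; adj := tri_adj |}.

Definition elab {V : Type} (f : V -> Z) (u v : V) : Z := Z.abs (f u - f v).

Definition proper_td_labeling (G : graph) (k : Z) (f : vtx G -> Z) : Prop :=
  (forall v, 1 <= f v <= k) /\
  (forall u v, adj G u v -> f u <> f v) /\
  (forall v u w, adj G v u -> adj G v w -> u <> w -> elab f v u <> elab f v w) /\
  (forall u v, adj G u v -> elab f u v <> f u /\ elab f u v <> f v).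

Definition has_td_labeling (G : graph) (k : Z) : Prop :=
  exists f : vtx G -> Z, proper_td_labeling G k f.

Definition chi_td_eq (G : graph) (k : Z) : Prop :=
  1 <= k /\ has_td_labeling G k /\ (forall j, 1 <= j < k -> ~ has_td_labeling G j).

(* Main.v *)
Require Import Defs.
From Stdlib Require Import ZArith Lia List.
Import ListNotations.
Open Scope Z_scope.

Definition gl (r : Z) : Z := nth (Z.to_nat r) [1;3;12;11;8;2;7;10;9] 1.
Definition F (r o : Z) : Z := gl ((r + o) mod 9).
Definition fl (p : Z * Z) : Z := gl ((fst p + 2 * snd p) mod 9).
Definition os : list Z := [1; -1; 2; -2; 3; -3].
Definition nbr (p : Z * Z) (o : Z) : Z * Z :=
  let (a, b) := p in
  if o =? 1 then (a+1, b) else if o =? -1 then (a-1, b)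
  else if o =? 2 then (a, b+1) else if o =? -2 then (a, b-1)
  else if o =? 3 then (a+1, b+1) else (a-1, b-1).

Lemma adj_dir : forall p u, tri_adj p u ->
  exists o, In o os /\ u = nbr p o /\ fl u = F ((fst p + 2 * snd p) mod 9) o.
Proof.
  intros [a b] [c d] H; simpl in H.
  unfold F, fl; cbn [fst snd].
  destruct H as [[-> ->]|[[-> ->]|[[-> ->]|[[-> ->]|[[-> ->]|[-> ->]]]]]].
  - exists 1; split; [simpl; tauto|split; [reflexivity|]].
    rewrite Zplus_mod_idemp_l; f_equal; f_equal; ring.
  - exists (-1); split; [simpl; tauto|split; [reflexivity|]].
    rewrite Zplus_mod_idemp_l; f_equal; f_equal; ring.
  - exists 2; split; [simpl; tauto|split; [reflexivity|]].
    rewrite Zplus_mod_idemp_l; f_equal; f_equal; ring.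
  - exists (-2); split; [simpl; tauto|split; [reflexivity|]].
    rewrite Zplus_mod_idemp_l; f_equal; f_equal; ring.
  - exists 3; split; [simpl; tauto|split; [reflexivity|]].
    rewrite Zplus_mod_idemp_l; f_equal; f_equal; ring.
  - exists (-3); split; [simpl; tauto|split; [reflexivity|]].
    rewrite Zplus_mod_idemp_l; f_equal; f_equal; ring.
Qed.

Lemma r_cases : forall r, 0 <= r < 9 ->
  r = 0 \/ r = 1 \/ r = 2 \/ r = 3 \/ r = 4 \/ r = 5 \/ r = 6 \/ r = 7 \/ r = 8.
Proof. intros; lia. Qed.

Lemma loc1 : forall r o, 0 <= r < 9 -> In o os ->
  gl r <> F r o /\ Z.abs (gl r - F r o) <> gl r /\ Z.abs (gl r - F r o) <> F r o.
Proof.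
  intros r o Hr Ho.
  destruct (r_cases r Hr) as [->|[->|[->|[->|[->|[->|[->|[->| ->]]]]]]]];
  simpl in Ho; repeat destruct Ho as [<-|Ho]; try contradiction;
  vm_compute; repeat split; discriminate.
Qed.

Lemma loc2 : forall r o1 o2, 0 <= r < 9 -> In o1 os -> In o2 os -> o1 <> o2 ->
  Z.abs (gl r - F r o1) <> Z.abs (gl r - F r o2).
Proof.
  intros r o1 o2 Hr H1 H2 Hne.
  destruct (r_cases r Hr) as [->|[->|[->|[->|[->|[->|[->|[->| ->]]]]]]]];
  simpl in H1, H2; repeat destruct H1 as [<-|H1]; try contradiction;
  repeat destruct H2 as [<-|H2]; try contradiction;
  try (exfalso; apply Hne; reflexivity);
  vm_compute; discriminate.
Qed.

Lemma upper : has_td_labeling Omega_T 12.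
Proof.
  exists fl. unfold proper_td_labeling; simpl.
  assert (Hr : forall p : Z * Z, 0 <= (fst p + 2 * snd p) mod 9 < 9)
    by (intros; apply Z.mod_pos_bound; lia).
  split; [|split; [|split]].
  - intros p. unfold fl.
    destruct (r_cases _ (Hr p)) as [->|[->|[->|[->|[->|[->|[->|[->| ->]]]]]]]];
    vm_compute; split; discriminate.
  - intros u v H. destruct (adj_dir u v H) as [o [Ho [_ Hv]]].
    rewrite Hv. apply (loc1 _ o (Hr u) Ho).
  - intros v u w Hu Hw Hne.
    destruct (adj_dir v u Hu) as [o1 [Ho1 [Eu Hu']]].
    destruct (adj_dir v w Hw) as [o2 [Ho2 [Ew Hw']]].
    unfold elab. rewrite Hu', Hw'.
    apply (loc2 _ o1 o2 (Hr v) Ho1 Ho2).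
    intros ->. apply Hne. rewrite Eu, Ew. reflexivity.
  - intros u v H. destruct (adj_dir u v H) as [o [Ho [_ Hv]]].
    unfold elab. rewrite Hv. destruct (loc1 _ o (Hr u) Ho) as [_ [A B]].
    split; assumption.
Qed.

Definition cond (x y : Z) : bool :=
  negb (y =? x) && negb (Z.abs (x - y) =? x) && negb (Z.abs (x - y) =? y).
Definition Dset (x : Z) (L : list Z) : list Z :=
  nodup Z.eq_dec (map (fun y => Z.abs (x - y)) (filter (cond x) L)).
Definition step (L : list Z) : list Z :=
  filter (fun x => Nat.leb 6 (length (Dset x L))) L.

Lemma NoDup_map_pw {A B} (g : A -> B) (l : list A) :
  NoDup l -> (forall u w, In u l -> In w l -> u <> w -> g u <> g w) ->
  NoDup (map g l).
Proof.
  induction 1 as [|x l Hx Hl IH]; intros H; simpl; constructor.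
  - intros Hin. apply in_map_iff in Hin as [y [Hy Hyl]].
    apply (H x y); simpl; auto. intros ->; contradiction.
  - apply IH. intros u w Hu Hw. apply H; simpl; auto.
Qed.

Definition nbl (p : Z * Z) : list (Z * Z) :=
  let (a, b) := p in [(a+1,b);(a-1,b);(a,b+1);(a,b-1);(a+1,b+1);(a-1,b-1)].

Lemma nbl_adj : forall p u, In u (nbl p) -> tri_adj p u.
Proof.
  intros [a b] u H; simpl in H.
  repeat destruct H as [<-|H]; try contradiction; simpl; lia.
Qed.

Lemma nbl_nodup : forall p, NoDup (nbl p).
Proof.
  intros [a b]; simpl.
  repeat constructor; simpl; intros H; repeat destruct H as [H|H];
  try contradiction; injection H; lia.
Qed.

Lemma step_sound : forall (f : Z * Z -> Z) L k,
  proper_td_labeling Omega_T k f -> (forall v, In (f v) L) ->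
  forall v, In (f v) (step L).
Proof.
  intros f L k [_ [Hi [Hii Hiii]]] HL v. simpl in *.
  unfold step. apply filter_In. split; [apply HL|].
  apply Nat.leb_le.
  replace 6%nat with (length (map (elab f v) (nbl v))) by (destruct v; reflexivity).
  apply NoDup_incl_length.
  - apply NoDup_map_pw; [apply nbl_nodup|].
    intros u w Hu Hw Hne. apply Hii; auto using nbl_adj.
  - intros e He. apply in_map_iff in He as [u [<- Hu]].
    apply nbl_adj in Hu.
    unfold Dset. apply nodup_In. apply in_map_iff. exists (f u).
    split; [reflexivity|]. apply filter_In. split; [apply HL|].
    specialize (Hi v u Hu). specialize (Hiii v u Hu). unfold elab in Hiii.
    unfold cond.
    destruct (Z.eqb_spec (f u) (f v)); [congruence|].
    destruct (Z.eqb_spec (Z.abs (f v - f u)) (f v)); [tauto|].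
    destruct (Z.eqb_spec (Z.abs (f v - f u)) (f u)); [tauto|].
    reflexivity.
Qed.

Definition L0 : list Z := [1;2;3;4;5;6;7;8;9;10;11].

Lemma final_empty : step (step (step (step (step L0)))) = [].
Proof. vm_compute. reflexivity. Qed.

Lemma lower : forall j, 1 <= j < 12 -> ~ has_td_labeling Omega_T j.
Proof.
  intros j Hj [f Hf].
  assert (H0 : forall v, In (f v) L0).
  { intros v. destruct Hf as [Hb _]. specialize (Hb v). simpl in Hb.
    assert (f v = 1 \/ f v = 2 \/ f v = 3 \/ f v = 4 \/ f v = 5 \/ f v = 6 \/
            f v = 7 \/ f v = 8 \/ f v = 9 \/ f v = 10 \/ f v = 11) by lia.
    unfold L0; simpl; lia. }
  pose proof (step_sound f _ _ Hf H0) as H1.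
  pose proof (step_sound f _ _ Hf H1) as H2.
  pose proof (step_sound f _ _ Hf H2) as H3.
  pose proof (step_sound f _ _ Hf H3) as H4.
  pose proof (step_sound f _ _ Hf H4) as H5.
  specialize (H5 (0,0)). rewrite final_empty in H5. exact H5.
Qed.

Theorem mainTheorem4 : chi_td_eq Omega_T 12.
Proof.
  split; [lia|]. split; [exact upper|exact lower].
Qed.
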